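(* Let $M=\mathbb N\cup\{0\}$ with base point $0$ and metric $d(n,0)=n!$ for $n\ge1$ and $d(n,m)=n!+m!$ for distinct $n,m\ge1$. Define $f\colon M\to M$ by $f(0)=0$ and $f(n)=n-1$ for $n\ge1$. Then $f$ is Lipschitz, $f(M)=M$ is not totally bounded, and $\widehat f\colon\mathcal F(M)\to\mathcal F(M)$ is compact.
   Context: Scalars are $\mathbb K=\mathbb R$ or $\mathbb C$. For a pointed metric space $(M,d,0_M)$, $\mathrm{Lip}_0(M)$ denotes the Banach space of Lipschitz functions $g\colon M\to\mathbb K$ with $g(0_M)=0$ normed by the best Lipschitz constant; $\delta(x)\in\mathrm{Lip}_0(M)^*$ is evaluation at $x$; the Lipschitz-free space $\mathcal F(M)$ is the norm-closed linear span of $\{\delta(x):x\in M\}$ in $\mathrm{Lip}_0(M)^*$. For a Lipschitz map $f\colon M\to N$ with $f(0_M)=0_N$, $\widehat f\colon\mathcal F(M)\to\mathcal F(N)$ is the unique bounded linear operator with $\widehat f(\delta(x))=\delta(f(x))$ for all $x\in M$. *)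

(* Defs.v *)
From mathcomp Require Import all_boot all_order all_algebra.
From mathcomp Require Import reals.
From mathcomp.real_closed Require Export complex.
Set Implicit Arguments. Unset Strict Implicit. Unset Printing Implicit Defensive.
Import Order.TTheory GRing.Theory Num.Theory.
Local Open Scope ring_scope.

(* The pointed metric space M = {0,1,2,...} (carrier nat), base point 0,
   d(n,0) = d(0,n) = n!, d(n,m) = n! + m! for distinct n,m >= 1, d(n,n) = 0.
   All distances are natural numbers, so d is nat-valued. *)
Definition Mdist (n m : nat) : nat :=
  if n == m then 0%N
  else if n == 0%N then m`!
  else if m == 0%N then n`!
  else (n`! + m`!)%N.

Definition fM (n : nat) : nat := n.-1.

Definition M_lipschitz (R : realType) (h : nat -> nat) : Prop :=
  exists L : R, forall x y : nat, (Mdist (h x) (h y))%:R <= L * (Mdist x y)%:R.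

Definition M_totally_bounded (R : realType) : Prop :=
  forall eps : R, 0 < eps ->
    exists (n : nat) (c : nat -> nat),
      forall x : nat, exists i : nat, (i < n)%N /\ (Mdist x (c i))%:R < eps.

Definition Lip0 (K : numFieldType) (g : nat -> K) : Prop :=
  g 0%N = 0 /\
  exists L : K, forall x y : nat, `|g x - g y| <= L * (Mdist x y)%:R.

Definition lip1 (K : numFieldType) (g : nat -> K) : Prop :=
  forall x y : nat, `|g x - g y| <= (Mdist x y)%:R.

(* Functionals on Lip_0(M); only their values on Lip_0(M) are relevant. *)
Definition functional (K : numFieldType) := (nat -> K) -> K.

Definition fsub (K : numFieldType) (phi psi : functional K) : functional K :=
  fun g => phi g - psi g.

Definition dnorm_le (K : numFieldType) (phi : functional K) (c : K) : Prop :=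
  forall g : nat -> K, Lip0 g -> lip1 g -> `|phi g| <= c.

Definition delta (K : numFieldType) (x : nat) : functional K := fun g => g x.

(* phi lies in the linear span of {delta(x) : x \in M} (as an element of
   Lip_0(M)^*, i.e. agreeing with a finite combination on Lip_0(M)). *)
Definition in_span_delta (K : numFieldType) (phi : functional K) : Prop :=
  exists s : seq (K * nat),
    forall g : nat -> K, Lip0 g -> phi g = \sum_(p <- s) p.1 * delta p.2 g.

(* phi \in F(M): phi is in the norm closure of span{delta(x)} in Lip_0(M)^*. *)
Definition in_free (K : numFieldType) (phi : functional K) : Prop :=
  forall eps : K, 0 < eps ->
    exists psi : functional K, in_span_delta psi /\ dnorm_le (fsub phi psi) eps.

(* \hat f : F(M) -> F(M), phi |-> phi o C_f where C_f g = g o f; this is the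
   bounded linear operator with \hat f (delta x) = delta (f x). *)
Definition fhat (K : numFieldType) (f : nat -> nat) (phi : functional K)
  : functional K := fun g => phi (g \o f).

(* T : F(M) -> F(M) is a compact operator: the image of the closed unit ball
   of F(M) is totally bounded in norm (equivalently relatively compact, as
   F(M) is a Banach space). *)
Definition compact_op_free (K : numFieldType)
    (T : functional K -> functional K) : Prop :=
  forall eps : K, 0 < eps ->
    exists (n : nat) (c : nat -> functional K),
      forall phi : functional K, in_free phi -> dnorm_le phi 1 ->
        exists i : nat, (i < n)%N /\ dnorm_le (fsub (T phi) (c i)) eps.

(* Main.v *)
Require Import Defs.
From mathcomp Require Import all_boot all_order all_algebra.
From mathcomp Require Import reals.
From mathcomp.real_closed Require Import complex.
From mathcomp Require Import zify ring lra.
Import Order.TTheory GRing.Theory Num.Theory.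
Local Open Scope ring_scope.

Lemma fact_le_S n : (n`! <= n.+1`!)%N.
Proof. by rewrite factS leq_pmull. Qed.

Lemma Mdist_fM x y : (Mdist (fM x) (fM y) <= Mdist x y)%N.
Proof.
rewrite /Mdist /fM.
case: x => [|x]; case: y => [|y] //=.
- by case: eqP => // _; apply: fact_le_S.
- by case: eqP => // _; apply: fact_le_S.
- case: (x =P y) => [->|nxy]; first by rewrite eqxx.
  have -> : (x.+1 == y.+1) = false by apply/eqP => -[].
  have := fact_le_S x; have := fact_le_S y.
  case: eqP => [->|_] /=; first by lia.
  case: eqP => [->|_] /=; lia.
Qed.

Lemma Mdist_eq0 x y : Mdist x y = 0%N -> x = y.
Proof.
rewrite /Mdist; case: eqP => // _.
have := fact_gt0 x; have := fact_gt0 y.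
case: eqP => _; first lia. case: eqP => _; lia.
Qed.

Section Gen.
Variable K : numFieldType.

Lemma lip1_bound (g : nat -> K) : g 0%N = 0 -> lip1 g ->
  forall n, `|g n| <= (n`!)%:R.
Proof.
move=> g0 Hg [|n]; first by rewrite g0 normr0.
by have := Hg n.+1 0%N; rewrite g0 subr0.
Qed.

Lemma bound_lip (u : nat -> K) : u 0%N = 0 -> (forall n, `|u n| <= (n`!)%:R) ->
  Lip0 u /\ lip1 u.
Proof.
move=> u0 Hu.
have H1 : lip1 u.
  move=> x y; rewrite /Mdist.
  case: eqP => [->|nxy]; first by rewrite subrr normr0.
  case: eqP => [->|_]; first by rewrite u0 sub0r normrN.
  case: eqP => [->|_]; first by rewrite u0 subr0.
  by rewrite natrD (le_trans (ler_normB _ _)) // lerD.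
split=> //; split=> //; exists 1 => x y; rewrite mul1r; exact: H1.
Qed.

Lemma Lip0_comp (g : nat -> K) : Lip0 g -> Lip0 (g \o fM).
Proof.
case=> g0 [L HL]; split=> //; exists `|L| => x y /=.
have := HL (fM x) (fM y).
case E: (Mdist (fM x) (fM y)) => [|d].
  by move/Mdist_eq0: E => -> _; rewrite subrr normr0 mulr_ge0.
move=> H.
have Ld : 0 <= L * d.+1%:R by apply: le_trans H.
rewrite -(ger0_norm Ld) normrM normr_nat in H.
apply: (le_trans H); apply: ler_wpM2l => //.
by rewrite ler_nat -E Mdist_fM.
Qed.

Lemma lip1_comp (g : nat -> K) : Lip0 g -> lip1 g -> Lip0 (g \o fM) /\ lip1 (g \o fM).
Proof.
case=> g0 _ Hg; apply: bound_lip => [//|n] /=.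
have H := @lip1_bound g g0 Hg (fM n). apply: (le_trans H). rewrite ler_nat /fM. clear H.
by case: n => //= n; apply: fact_le_S.
Qed.

End Gen.

Section Gen2.
Variable K : numFieldType.

Lemma fhat_free (phi : functional K) : in_free phi -> in_free (fhat fM phi).
Proof.
move=> Hphi eps e0; case: (Hphi eps e0) => psi [[s Hs] Hd].
exists (fhat fM psi); split.
- exists [seq (p.1, fM p.2) | p <- s] => g Hg.
  by rewrite /fhat Hs ?big_map //; apply: Lip0_comp.
- move=> g Hg Hg1; rewrite /fsub /fhat; case: (@lip1_comp K g Hg Hg1) => H1 H2.
  exact: Hd.
Qed.

Lemma vecnet (e : K) (S : seq K) :
  (forall b : K, `|b| <= 1 -> exists2 z, z \in S & `|b - z| <= e) ->
  forall N, exists vs : seq (seq K), forall b : nat -> K,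
    (forall k, (k < N)%N -> `|b k| <= 1) ->
    exists2 v, v \in vs & forall k, (k < N)%N -> `|b k - nth 0 v k| <= e.
Proof.
move=> HS; elim=> [|N IH].
  by exists [:: [::]] => b _; exists [::] => //; rewrite mem_seq1.
case: IH => vs Hvs.
exists [seq x :: v | x <- S, v <- vs] => b Hb.
case: (HS (b 0%N) (Hb 0%N isT)) => x xS Hx.
case: (Hvs (fun k => b k.+1)) => [k kN|v vvs Hv]; first exact: Hb.
exists (x :: v); first by apply/allpairsP; exists (x, v).
by case=> [|k] //= kN; apply: Hv.
Qed.

End Gen2.

Definition ufun (K : numFieldType) (k : nat) : nat -> K :=
  fun n => if n == k.+1 then (k`!)%:R else 0.

Section Gen3.
Variable K : numFieldType.

Lemma ufun_lip k : Lip0 (ufun K k) /\ lip1 (ufun K k).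
Proof.
apply: bound_lip => [//|n]; rewrite /ufun; case: eqP => [->|_].
  by rewrite normr_nat ler_nat fact_le_S.
by rewrite normr0 ler0n.
Qed.

Lemma compact_gen
  (Harch : forall e : K, 0 < e -> exists N : nat, (N.+1%:R)^-1 <= e)
  (Hdisk : forall e : K, 0 < e -> exists S : seq K,
     forall b : K, `|b| <= 1 -> exists2 z, z \in S & `|b - z| <= e) :
  compact_op_free (fhat (K:=K) fM).
Proof.
move=> eps e0.
have e40 : 0 < eps / 4 by rewrite divr_gt0.
case: (Harch _ e40) => N HN.
set dl := eps / 4 / N.+2%:R.
set e := eps / 4 / N.+1%:R.
have dl0 : 0 < dl by rewrite divr_gt0.
have ee0 : 0 < e by rewrite divr_gt0.
case: (Hdisk e ee0) => S HS.
case: (@vecnet K e S HS N) => vs Hvs.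
exists (size vs), (fun i => fun g => \sum_(k < N) g k / (k`!)%:R * nth 0 (nth [::] vs i) k).
move=> phi Hphi Hn1.
case: (Hphi dl dl0) => psi [[s Hs] Hd].
have Hb : forall k, (k < N)%N -> `|phi (ufun K k)| <= 1.
  by move=> k _; case: (ufun_lip k) => ? ?; apply: Hn1.
case: (Hvs _ Hb) => v vvs Hv.
exists (index v vs); split; first by rewrite index_mem.
rewrite nth_index //.
move=> g Hg Hg1; rewrite /fsub /fhat.
case: (Hg) => g0 _.
have gb := @lip1_bound K g g0 Hg1.

set h := g \o fM.
set hN := fun n => if (n <= N)%N then h n else 0.
set sN := fun n => if (n <= N)%N then 0 else N.+1%:R * h n.
set c := fun k : nat => g k / (k`!)%:R.
have hb : forall n, `|h n| <= (n.-1)`!%:R by move=> n; apply: gb.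
have h0 : h 0%N = 0 by rewrite /h /= /fM /= g0.
have Lh : Lip0 h /\ lip1 h := @lip1_comp K g Hg Hg1.
have LhN : Lip0 hN /\ lip1 hN.
  apply: bound_lip => [|n]; rewrite /hN; first by rewrite leq0n.
  case: leqP => _; last by rewrite normr0 ler0n.
  apply: (le_trans (hb n)); rewrite ler_nat; case: n => // n; exact: fact_le_S.
have LsN : Lip0 sN /\ lip1 sN.
  apply: bound_lip => [|n]; rewrite /sN; first by rewrite leq0n.
  case: leqP => Hn; first by rewrite normr0 ler0n.
  rewrite normrM normr_nat.
  apply: (le_trans (ler_wpM2l (ler0n _ _) (hb n))).
  rewrite -natrM ler_nat; case: n Hn => // m Hm.
  by rewrite factS /= leq_mul2r Hm orbT.
have Eh : forall n, h n = hN n + sN n / N.+1%:R.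
  move=> n; rewrite /hN /sN; case: leqP => _; first by rewrite mul0r addr0.
  by rewrite add0r mulrC mulKf // pnatr_eq0.
have EhN : forall n, hN n = \sum_(k < N) c k * ufun K k n.
  move=> n; rewrite /hN /ufun; case: leqP => Hn.
  - case: n Hn => [|m] Hm.
      by rewrite h0 big1 // => i _; rewrite mulr0.
    rewrite (bigD1 (Ordinal Hm)) //= eqxx big1 ?addr0.
      by rewrite /c /h /= /fM /= divfK // pnatr_eq0 -lt0n fact_gt0.
    move=> i /eqP nim; case: eqP => [[him]|_]; last by rewrite mulr0.
    by exfalso; apply: nim; apply: val_inj; rewrite /= him.
  - rewrite big1 // => i _; case: eqP => [eni|_]; last by rewrite mulr0.
    by move: (ltn_ord i) Hn; rewrite eni; lia.
have Epsi : forall w, Lip0 w -> psi w = \sum_(p <- s) p.1 * w p.2 by [].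
have E1 : psi h = psi hN + psi sN / N.+1%:R.
  rewrite !Epsi //; try (by case: Lh); try (by case: LhN); try (by case: LsN).
  rewrite mulr_suml -big_split; apply: eq_bigr => p _.
  by rewrite Eh mulrDr mulrA.
have Lu : forall k, Lip0 (ufun K k) by move=> k; case: (ufun_lip k).
have E2 : psi hN = \sum_(k < N) c k * psi (ufun K k).
  rewrite Epsi; last by case: LhN.
  under eq_bigr do rewrite EhN mulr_sumr.
  rewrite exchange_big; apply: eq_bigr => k _; rewrite Epsi // mulr_sumr.
  by apply: eq_bigr => p _; rewrite mulrCA.

have -> : \sum_(k < N) g k / (k`!)%:R * v`_k = \sum_(k < N) c k * v`_k by [].
have -> : phi h - \sum_(k < N) c k * v`_k =
   (phi h - psi h) + (psi sN - phi sN) / N.+1%:R + phi sN / N.+1%:R +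
   (\sum_(k < N) c k * (psi (ufun K k) - phi (ufun K k)) +
    \sum_(k < N) c k * (phi (ufun K k) - v`_k)).
  have -> : \sum_(k < N) c k * (psi (ufun K k) - phi (ufun K k)) +
    \sum_(k < N) c k * (phi (ufun K k) - v`_k) =
    \sum_(k < N) c k * psi (ufun K k) - \sum_(k < N) c k * v`_k.
    rewrite -big_split -sumrB /=; apply: eq_bigr => k _; ring.
  rewrite E1 E2; ring.
have hc : forall k, `|c k| <= 1.
  move=> k; rewrite /c normrM normfV normr_nat ler_pdivrMr ?mul1r //.
  by rewrite ltr0n fact_gt0.
have Np : (0 : K) < N.+1%:R by rewrite ltr0n.
have bA : `|phi h - psi h| <= dl by case: Lh => ? ?; apply: Hd.
have bB : `|(psi sN - phi sN) / N.+1%:R| <= dl.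
  rewrite normrM normfV normr_nat ler_pdivrMr // distrC.
  apply: (le_trans (_ : _ <= dl)); first by case: LsN => ? ?; apply: Hd.
  by rewrite ler_pMr // ler1n.
have bC : `|phi sN / N.+1%:R| <= eps / 4.
  rewrite normrM normfV normr_nat; apply: (le_trans _ HN).
  rewrite -[X in _ <= X]mul1r; apply: ler_wpM2r; first by rewrite invr_ge0 ltW.
  by case: LsN => ? ?; apply: Hn1.
have bD : `|\sum_(k < N) c k * (psi (ufun K k) - phi (ufun K k))| <= dl *+ N.
  apply: (le_trans (ler_norm_sum _ _ _)).
  apply: (le_trans (_ : _ <= \sum_(k < N) dl)); last by rewrite sumr_const card_ord.
  apply: ler_sum => k _; rewrite normrM -[X in _ <= X]mul1r.
  apply: ler_pM => //; rewrite distrC.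
  by case: (ufun_lip k) => ? ?; apply: Hd.
have bE : `|\sum_(k < N) c k * (phi (ufun K k) - v`_k)| <= eps / 4.
  apply: (le_trans (ler_norm_sum _ _ _)).
  apply: (le_trans (_ : _ <= \sum_(k < N) e)).
    apply: ler_sum => k _; rewrite normrM -[X in _ <= X]mul1r.
    by apply: ler_pM => //; apply: Hv.
  rewrite sumr_const card_ord.
  apply: (le_trans (_ : _ <= e *+ N.+1)); first by rewrite mulrSr lerDl ltW.
  by rewrite -mulr_natr /e divfK // pnatr_eq0.
have Hdl : dl + (dl + dl *+ N) = eps / 4.
  by rewrite -mulrS -mulrS -[LHS]mulr_natr /dl divfK // pnatr_eq0.
apply: (le_trans (ler_normD _ _)).
apply: (le_trans (_ : _ <= dl + dl + eps / 4 + (dl *+ N + eps / 4))).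
  apply: lerD; last by apply: (le_trans (ler_normD _ _)); apply: lerD.
  apply: (le_trans (ler_normD _ _)); apply: lerD => //.
  by apply: (le_trans (ler_normD _ _)); apply: lerD.
have -> : dl + dl + eps / 4 + (dl *+ N + eps / 4) =
  (dl + (dl + dl *+ N)) + eps / 4 + eps / 4 by ring.
rewrite Hdl.
have -> : eps / 4 + eps / 4 + eps / 4 = eps - eps / 4.
  by field.
by rewrite gerBl ltW.
Qed.
End Gen3.
Lemma grid_aux (F : realFieldType) (d b : F) : 0 < d -> 0 <= b ->
  forall k, exists j, (j <= k)%N /\ j%:R * d <= b /\ (b <= j.+1%:R * d \/ j = k).
Proof.
move=> d0 b0; elim=> [|k [j [jk [jb H]]]].
  by exists 0%N; rewrite mul0r; split=> //; split=> //; right.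
case: H => [H|E].
  by exists j; split; [lia|split=> //; left].
subst j.
case: (lerP b (k.+1%:R * d)) => H.
  by exists k; split=> //; split=> //; left.
by exists k.+1; split=> //; split; [apply: ltW|right].
Qed.

Section Inst.
Variable R : realType.

Lemma archR (e : R) : 0 < e -> exists N : nat, (N.+1%:R)^-1 <= e.
Proof.
move=> e0; have ie0 : 0 <= e^-1 by rewrite invr_ge0 ltW.
have := archi_boundP ie0; set N := Num.Def.archi_bound _ => HN.
exists N.
have N1 : (0 : R) < N.+1%:R by rewrite ltr0n.
rewrite -[X in _ <= X]invrK lef_pV2 ?posrE ?invr_gt0 //.
apply: (le_trans (ltW HN)); rewrite ler_nat; lia.
Qed.

Lemma diskR (e : R) : 0 < e -> exists S : seq R,
  forall b : R, `|b| <= 1 -> exists2 z, z \in S & `|b - z| <= e.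
Proof.
move=> e0; have ie0 : 0 <= 2 / e by rewrite divr_ge0 // ltW.
have := archi_boundP ie0; set k := Num.Def.archi_bound _ => Hk.
exists [seq j%:R * e - 1 | j <- iota 0 k.+1] => b Hb.
have b1 : 0 <= b + 1 by move: Hb; rewrite ler_norml; lra.
case: (@grid_aux R e (b + 1) e0 b1 k) => j [jk [jb H]].
exists (j%:R * e - 1); first by apply/mapP; exists j => //; rewrite mem_iota; lia.
have Hke : 2 < k%:R * e by rewrite -ltr_pdivrMr.
case: H => [H|jk'].
  rewrite ler_norml; rewrite -natr1 mulrDl mul1r in H; apply/andP; split; lra.
subst j; move: Hb; rewrite !ler_norml => /andP [? ?]; apply/andP; split; lra.
Qed.

Local Open Scope complex_scope.

Lemma archC (e : R[i]) : 0 < e -> exists N : nat, (N.+1%:R)^-1 <= e.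
Proof.
case: e => a b; rewrite ltcE /= => /andP [/eqP b0 a0].
case: (@archR a a0) => N HN; exists N.
rewrite b0 complexr0 -(rmorph_nat (real_complex R)) -(fmorphV (real_complex R)) lecR //.
Qed.

Lemma diskC (e : R[i]) : 0 < e -> exists S : seq R[i],
  forall b : R[i], `|b| <= 1 -> exists2 z, z \in S & `|b - z| <= e.
Proof.
case: e => a b0; rewrite ltcE /= => /andP [/eqP -> a0].
have a20 : 0 < a / 2 by rewrite divr_gt0.
case: (@diskR (a / 2) a20) => S HS.
exists [seq Complex p q | p <- S, q <- S] => -[x y].
rewrite normc_def /= -[1]/((1 : R)%:C) lecR => Hxy.
have Hx : `|x| <= 1.
  rewrite -sqrtr_sqr; apply: le_trans Hxy; apply: ler_wsqrtr.
  by rewrite lerDl sqr_ge0.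
have Hy : `|y| <= 1.
  rewrite -sqrtr_sqr; apply: le_trans Hxy; apply: ler_wsqrtr.
  by rewrite lerDr sqr_ge0.
case: (HS x Hx) => p pS Hp; case: (HS y Hy) => q qS Hq.
exists (Complex p q); first by apply/allpairsP; exists (p, q).
have -> : (Complex x y) - (Complex p q) = Complex (x - p) (y - q) by [].
rewrite normc_def /= complexr0 lecR.
rewrite -(ger0_norm (ltW a0)) -sqrtr_sqr; apply: ler_wsqrtr.
have := real_normK (num_real (x - p)); have := real_normK (num_real (y - q)).
have := normr_ge0 (x - p); have := normr_ge0 (y - q).
move: Hp Hq; set u := `|x - p|; set v := `|y - q| => Hp Hq u0 v0 <- <-.
nra.
Qed.

End Inst.

Theorem mainTheorem13 (R : realType) :
  M_lipschitz R fM /\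
  (forall y : nat, exists x : nat, fM x = y) /\
  ~ M_totally_bounded R /\
  (forall phi : functional R, in_free phi -> in_free (fhat fM phi)) /\
  compact_op_free (fhat (K := R) fM) /\
  (forall phi : functional R[i], in_free phi -> in_free (fhat fM phi)) /\
  compact_op_free (fhat (K := R[i]) fM).
Proof.
split.
  by exists 1 => x y; rewrite mul1r ler_nat Mdist_fM.
split; first by move=> y; exists y.+1.
split.
  move=> H; case: (H 1 ltr01) => n [c Hc].
  case: (Hc (\sum_(i < n) c i).+1) => i [ilt Hi].
  move: Hi; rewrite -[1]/(1%:R) ltr_nat ltnS leqn0 => /eqP /Mdist_eq0 E.
  have : (c i <= \sum_(j < n) c j)%N.
    by rewrite (bigD1 (Ordinal ilt)) //= leq_addr.
  by rewrite -E ltnn.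
split; first exact: fhat_free.
split; first exact: compact_gen (@archR R) (@diskR R).
split; first exact: fhat_free.
exact: compact_gen (@archC R) (@diskC R).
Qed.
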